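(* Let $\{(\phi^n,\mu^n,R^n,\xi^n)\}$ be generated by Scheme 2A and set $M:=R^0=\sqrt{E[\phi_{in}]}$. Then for all $n\ge0$: $0<R^{n+1}\le R^n\le M$ and $0<\xi^{n+1}\le\frac{M}{\sqrt{c_0}}$.
   Context: Standing setup: $\Omega\subset\mathbb{R}^d$ ($d=2,3$) is a bounded domain with smooth boundary and outward unit normal $\mathbf{n}$; $\|\cdot\|_0$ is the $L^2(\Omega)$ norm. Let $\lambda\ge 0$, $H(s)=\frac14(s^2-1)^2$, $h(s)=H'(s)=s^3-s$. Fix $c_0>0$ and define $E[\phi]=\int_\Omega\big(\tfrac12|\nabla\phi|^2+\tfrac{\lambda}{2}\phi^2+H(\phi)\big)dx+c_0$ (so $E[\phi]\ge c_0$). Time step $\Delta t>0$. Set $\phi^0=\phi_{in}$, $\mu^0=-\Delta\phi^0+\lambda\phi^0+h(\phi^0)$, $R^0=\sqrt{E[\phi^0]}$, $\phi^{-1}=\phi^0$, $\mu^{-1}=\mu^0$. Write $\bar\phi^n=2\phi^n-\phi^{n-1}$, $\tilde\phi^{n+1/2}=\frac32\phi^n-\frac12\phi^{n-1}$, $\tilde\mu^{n+1/2}=\frac32\mu^n-\frac12\mu^{n-1}$. Scheme 2A: for $n\ge0$, $\frac{3\phi^{n+1}-4\phi^n+\phi^{n-1}}{2\Delta t}=\Delta\mu^{n+1}$, $\mu^{n+1}=-\Delta\phi^{n+1}+\lambda\phi^{n+1}+|\xi^{n+1}|^2h(\bar\phi^n)$, $\frac{R^{n+1}-R^n}{\Delta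 t}=-\frac{\xi^{n+1}}{2\sqrt{E[\tilde\phi^{n+1/2}]}}\int_\Omega|\nabla\tilde\mu^{n+1/2}|^2dx$, with $\xi^{n+1}=R^{n+1}/\sqrt{E[\bar\phi^n]}$, and $\nabla\phi^{n+1}\cdot\mathbf{n}=\nabla\mu^{n+1}\cdot\mathbf{n}=0$ on $\partial\Omega$. *)

(* Defs.v *)
From HB Require Import structures.
From mathcomp Require Import all_boot all_order all_algebra.
From mathcomp Require Import all_classical all_reals all_analysis.
Set Implicit Arguments. Unset Strict Implicit. Unset Printing Implicit Defensive.
Import Order.TTheory GRing.Theory Num.Theory.
Import numFieldNormedType.Exports.
Local Open Scope classical_set_scope.
Local Open Scope ring_scope.

Definition unitv {R : realType} (d : nat) (i : 'I_d) : 'rV[R]_d := delta_mx 0 i.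
Definition partial {R : realType} (d : nat) (i : 'I_d) (f : 'rV[R]_d -> R)
  : 'rV[R]_d -> R := fun x => derive f x (unitv (R:=R) i).

Definition grad_sq {R : realType} (d : nat) (f : 'rV[R]_d -> R) (x : 'rV[R]_d) : R :=
  \sum_(i < d) (partial i f x) ^+ 2.
Definition laplacian {R : realType} (d : nat) (f : 'rV[R]_d -> R) (x : 'rV[R]_d) : R :=
  \sum_(i < d) partial i (partial i f) x.
Definition grad_dot {R : realType} (d : nat) (f : 'rV[R]_d -> R) (v : 'rV[R]_d)
  (x : 'rV[R]_d) : R := \sum_(i < d) partial i f x * v 0 i.

Fixpoint Ck {R : realType} (d : nat) (k : nat) (f : 'rV[R]_d -> R) : Prop :=
  match k with
  | 0 => continuous f
  | k'.+1 => (forall x, differentiable f x) /\ (forall i : 'I_d, Ck k' (partial i f))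
  end.
Definition smooth {R : realType} (d : nat) (f : 'rV[R]_d -> R) : Prop :=
  forall k, Ck k f.

(** Iterated Lebesgue integral over R^d of an extended-real function
    (for non-negative measurable integrands this is the Lebesgue integral on
    R^d, by Tonelli). *)
Fixpoint iint {R : realType} (d : nat) : ('rV[R]_d -> \bar R) -> \bar R :=
  match d with
  | 0 => fun f => f 0
  | d'.+1 => fun f =>
      (\int[@lebesgue_measure R]_t
         iint (fun y : 'rV[R]_d' => f (row_mx (const_mx t : 'rV[R]_1) y)))%E
  end.

Definition intOmega {R : realType} (d : nat) (Omega : set 'rV[R]_d)
  (f : 'rV[R]_d -> R) : R :=
  fine (iint (fun x => ((\1_Omega x : R) * f x)%:E)).

(** A bounded domain with smooth boundary: bounded, open, connected, and given by
    a global smooth defining function rho with Omega = {rho < 0} and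
    grad rho <> 0 on {rho = 0}. *)
Definition smooth_defining_fun {R : realType} (d : nat) (Omega : set 'rV[R]_d)
  (rho : 'rV[R]_d -> R) : Prop :=
  smooth rho /\ Omega = [set x | rho x < 0] /\
  (forall x, rho x = 0 -> grad_sq rho x != 0).

Definition bounded_smooth_domain {R : realType} (d : nat) (Omega : set 'rV[R]_d)
  (rho : 'rV[R]_d -> R) : Prop :=
  open Omega /\ connected Omega /\ Omega !=set0 /\
  (exists M : R, forall x, Omega x -> `|x| <= M) /\
  smooth_defining_fun Omega rho.

Definition bdry {R : realType} (d : nat) (Omega : set 'rV[R]_d) : set 'rV[R]_d :=
  closure Omega `\` Omega.
Definition normal {R : realType} (d : nat) (rho : 'rV[R]_d -> R) (x : 'rV[R]_d)
  : 'rV[R]_d :=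
  (Num.sqrt (grad_sq rho x))^-1 *: \row_(i < d) partial i rho x.

Definition Hpot {R : realType} (s : R) : R := (s ^+ 2 - 1) ^+ 2 / 4.
Definition hpot {R : realType} (s : R) : R := s ^+ 3 - s.

Definition energy {R : realType} (d : nat) (Omega : set 'rV[R]_d) (lam c0 : R)
  (phi : 'rV[R]_d -> R) : R :=
  intOmega Omega (fun x => grad_sq phi x / 2 + lam / 2 * phi x ^+ 2 + Hpot (phi x))
  + c0.

(** Convention phi^{-1} = phi^0: prev u n = u (n-1) for n >= 1, u 0 for n = 0. *)
Definition prev {T : Type} (u : nat -> T) (n : nat) : T :=
  match n with 0 => u 0%N | n'.+1 => u n' end.

Definition extrap2 {R : realType} (d : nat) (u : nat -> 'rV[R]_d -> R) (n : nat)
  : 'rV[R]_d -> R := fun x => 2 * u n x - prev u n x.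
Definition extrap32 {R : realType} (d : nat) (u : nat -> 'rV[R]_d -> R) (n : nat)
  : 'rV[R]_d -> R := fun x => 3 / 2 * u n x - 1 / 2 * prev u n x.

Definition scheme2A {R : realType} (d : nat) (Omega : set 'rV[R]_d)
  (rho : 'rV[R]_d -> R) (lam c0 dt : R) (phi_in : 'rV[R]_d -> R)
  (phi mu : nat -> 'rV[R]_d -> R) (Rs xi : nat -> R) : Prop :=
  let E := energy Omega lam c0 in
  phi 0%N = phi_in /\
  (forall x, Omega x ->
     mu 0%N x = - laplacian phi_in x + lam * phi_in x + hpot (phi_in x)) /\
  Rs 0%N = Num.sqrt (E phi_in) /\
  (forall n, Ck 2 (phi n) /\ Ck 2 (mu n)) /\
  (forall n : nat,
     (forall x, Omega x ->
        (3 * phi n.+1 x - 4 * phi n x + prev phi n x) / (2 * dt)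
        = laplacian (mu n.+1) x) /\
     (forall x, Omega x ->
        mu n.+1 x = - laplacian (phi n.+1) x + lam * phi n.+1 x
                    + (xi n.+1) ^+ 2 * hpot (extrap2 phi n x)) /\
     (Rs n.+1 - Rs n) / dt
       = - (xi n.+1 / (2 * Num.sqrt (E (extrap32 phi n))))
           * intOmega Omega (grad_sq (extrap32 mu n)) /\
     xi n.+1 = Rs n.+1 / Num.sqrt (E (extrap2 phi n)) /\
     (forall x, bdry Omega x ->
        grad_dot (phi n.+1) (normal rho x) x = 0 /\
        grad_dot (mu n.+1) (normal rho x) x = 0)).

(* Main.v *)
Require Import Defs.
From HB Require Import structures.
From mathcomp Require Import all_boot all_order all_algebra.
From mathcomp Require Import all_classical all_reals all_analysis.
From mathcomp Require Import ring lra.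
Import Order.TTheory GRing.Theory Num.Theory.
Import numFieldNormedType.Exports.
Local Open Scope classical_set_scope.
Local Open Scope ring_scope.

Lemma iint_ge0 (R : realType) (d : nat) (f : 'rV[R]_d -> \bar R) :
  (forall x, (0 <= f x)%E) -> (0 <= iint f)%E.
Proof.
elim: d f => [|d IH] f f0 /=; first exact: f0.
apply: integral_ge0 => t _; apply: IH => y; exact: f0.
Qed.

Lemma intOmega_ge0 (R : realType) (d : nat) (Omega : set 'rV[R]_d) f :
  (forall x, 0 <= f x) -> 0 <= intOmega Omega f.
Proof.
move=> f0; apply: fine_ge0; apply: iint_ge0 => x.
rewrite lee_fin; apply: mulr_ge0 => //; rewrite /indic; case: (_ \in _) => //.
Qed.

Lemma grad_sq_ge0 (R : realType) (d : nat) (f : 'rV[R]_d -> R) x : 0 <= grad_sq f x.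
Proof. rewrite /grad_sq; apply: sumr_ge0 => i _; exact: sqr_ge0. Qed.

Lemma energy_ge (R : realType) (d : nat) (Omega : set 'rV[R]_d) lam c0 phi :
  0 <= lam -> c0 <= energy Omega lam c0 phi.
Proof.
move=> hl; rewrite /energy lerDr; apply: intOmega_ge0 => x.
apply: addr_ge0; [apply: addr_ge0|].
- apply: divr_ge0 => //; exact: grad_sq_ge0.
- apply: mulr_ge0; [exact: divr_ge0|exact: sqr_ge0].
- rewrite /Hpot; apply: divr_ge0 => //; exact: sqr_ge0.
Qed.

Theorem mainTheorem12 (R : realType) (d : nat) (Omega : set 'rV[R]_d)
  (rho : 'rV[R]_d -> R) (lam c0 dt : R) (phi_in : 'rV[R]_d -> R)
  (phi mu : nat -> 'rV[R]_d -> R) (Rs xi : nat -> R) :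
  (d = 2%N \/ d = 3%N) ->
  bounded_smooth_domain Omega rho ->
  0 <= lam -> 0 < c0 -> 0 < dt ->
  smooth phi_in ->
  scheme2A Omega rho lam c0 dt phi_in phi mu Rs xi ->
  let M := Rs 0%N in
  forall n : nat,
    0 < Rs n.+1 /\ Rs n.+1 <= Rs n /\ Rs n <= M /\
    0 < xi n.+1 /\ xi n.+1 <= M / Num.sqrt c0.
Proof.
move=> _ _ hl hc hdt _ [_ [_ [hR0 [_ hstep]]]] M.
have sqE : forall phi, Num.sqrt c0 <= Num.sqrt (energy Omega lam c0 phi).
  by move=> p; rewrite ler_sqrt ?energy_ge // (le_trans (ltW hc)) // energy_ge.
have sqc : 0 < Num.sqrt c0 by rewrite sqrtr_gt0.
have step : forall n, 0 < Rs n -> 0 < Rs n.+1 /\ Rs n.+1 <= Rs n.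
  move=> n hn.
  have [_ [_ [hr [hxi _]]]] := hstep n.
  set A := Num.sqrt (energy Omega lam c0 (extrap32 phi n)) in hr.
  set B := Num.sqrt (energy Omega lam c0 (extrap2 phi n)) in hxi.
  set I := intOmega Omega (grad_sq (extrap32 mu n)) in hr.
  have hA : 0 < A by apply: lt_le_trans (sqE _).
  have hB : 0 < B by apply: lt_le_trans (sqE _).
  have hI : 0 <= I by apply: intOmega_ge0 => x; exact: grad_sq_ge0.
  rewrite hxi in hr.
  set k := dt * I / (2 * A * B).
  have hk : 0 <= k by rewrite /k; apply: divr_ge0; [apply: mulr_ge0; [exact: ltW|]|
    apply: mulr_ge0; [apply: mulr_ge0|]; apply: ltW].
  have eq : Rs n.+1 * (1 + k) = Rs n.
    have : Rs n.+1 - Rs n = - (Rs n.+1 / B / (2 * A)) * I * dt.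
      by rewrite -hr mulfVK // gt_eqF.
    rewrite /k => h; apply/eqP; rewrite -subr_eq0; apply/eqP.
    rewrite (_ : _ * _ - _ = Rs n.+1 - Rs n + Rs n.+1 * (dt * I / (2 * A * B))); last by ring.
    rewrite h; field; rewrite ?gt_eqF //=; by rewrite ?hA ?hB ?hdt.
  have h1k : 0 < 1 + k by lra.
  have hpos : 0 < Rs n.+1.
    by rewrite -(pmulr_lgt0 _ h1k) eq.
  split => //.
  rewrite -eq ler_peMr ?lerDl //; exact: ltW.
have main : forall n, 0 < Rs n /\ Rs n <= M.
  elim => [|n [IH1 IH2]].
    split => //; rewrite hR0 sqrtr_gt0; apply: lt_le_trans hc _; exact: energy_ge.
  have [a b] := step n IH1; split => //; exact: le_trans IH2.
move=> n; have [h1 h2] := main n; have [h3 h4] := step n h1.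
have [_ [_ [_ [hxi _]]]] := hstep n.
have hB : 0 < Num.sqrt (energy Omega lam c0 (extrap2 phi n)) by apply: lt_le_trans (sqE _).
do 3 (split => //); rewrite hxi; split; first exact: divr_gt0.
apply: (@le_trans _ _ (M / Num.sqrt (energy Omega lam c0 (extrap2 phi n)))).
  by rewrite ler_pM2r ?invr_gt0 // (le_trans h4).
rewrite ler_pM2l; last by have [+ _] := main 0%N.
rewrite lef_pV2 ?posrE //; exact: sqE.
Qed.
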